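(* Let $(A;R)\in\mathcal C$ and $C\subseteq A$ with $C\le A$. For a closed set $F$ of the restriction $(C,\mathrm{cl}_C)$ (where $\mathrm{cl}_C(X)=\mathrm{cl}(X)\cap C$) write $\tilde F=\mathrm{cl}(F)$, its closure in $PG(A;R)$. Then for any closed sets $F_1,F_2$ of $(C,\mathrm{cl}_C)$, $\tilde F_1\cap\tilde F_2=\mathrm{cl}(F_1\cap F_2)$.
   Context: A set system is a pair $(A;R)$ where $R$ is a set of finite non-empty subsets of $A$; for $X\subseteq A$, $R[X]=\{r\in R:r\subseteq X\}$ and $\delta(X)=|X|-|R[X]|$. $\mathcal C$ is the class of finite set systems with $\delta(X)\ge0$ for all $X\subseteq A$. $X\le A$ means $\delta(X)\le\delta(X')$ for all $X\subseteq X'\subseteq A$. $d(X)=\min\{\delta(Y):X\subseteq Y\subseteq A\}$, $\mathrm{cl}(X)=\{y:d(X\cup\{y\})=d(X)\}$, and $PG(A;R)$ is the matroid $(A,\mathrm{cl})$; a closed set of a pregeometry is a set equal to its own closure. *)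

(* Defs.v *)
(* A finite set system (A;R) is modelled with A = the whole
   finite type T and R : {set {set T}}. *)
From mathcomp Require Import all_boot all_order all_algebra.
Set Implicit Arguments. Unset Strict Implicit. Unset Printing Implicit Defensive.
Import Order.TTheory GRing.Theory Num.Theory.

Section SetSystems.
Variable T : finType.
Implicit Types (R : {set {set T}}) (X Y : {set T}).

Definition set_system R : Prop := set0 \notin R.

Definition Rsub R X : {set {set T}} := [set r in R | r \subset X].

Definition delta R X : int := (#|X|%:Z - #|Rsub R X|%:Z)%R.

Definition inC R : Prop := set_system R /\ forall X, (0 <= delta R X)%R.

Definition self_sufficient R X : Prop :=
  forall X', X \subset X' -> (delta R X <= delta R X')%R.

(* d(X) = min { delta(Y) : X \subseteq Y \subseteq A }  (A itself is such a Y) *)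
Definition dim R X : int :=
  \big[Order.min/delta R setT]_(Y : {set T} | X \subset Y) delta R Y.

Definition cl R X : {set T} := [set y | dim R (y |: X) == dim R X].

Definition clC R (C : {set T}) X : {set T} := cl R X :&: C.

Definition closedC R (C F : {set T}) : Prop := F \subset C /\ clC R C F = F.

End SetSystems.

(* Main.v *)
Require Import Defs.
From mathcomp Require Import all_boot all_order all_algebra.
From mathcomp Require Import zify.
Import Order.TTheory GRing.Theory Num.Theory.
Set Implicit Arguments.
Local Notation dim := Defs.dim.
Local Notation delta := Defs.delta.

Section S.
Variable T : finType.
Variable R : {set {set T}}.
Implicit Types X Y Z : {set T}.

Lemma dim_le X Y : X \subset Y -> (dim R X <= delta R Y)%R.
Proof. by move=> h; rewrite /dim; apply: bigmin_le_cond. Qed.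

Lemma dim_ex X : exists Y, X \subset Y /\ delta R Y = dim R X.
Proof.
case: (@arg_minP _ _ _ setT (fun Y : {set T} => X \subset Y) (delta R)).
  exact: subsetT.
move=> Y HY Hmin; exists Y; split => //.
apply/eqP; rewrite eq_le; apply/andP; split; last exact: dim_le.
rewrite /dim; apply/bigmin_geP; split; first by apply: Hmin; exact: subsetT.
exact: Hmin.
Qed.

Lemma dim_mono X X' : X \subset X' -> (dim R X <= dim R X')%R.
Proof.
move=> h; have [Y [hY <-]] := dim_ex X'; apply: dim_le; exact: subset_trans hY.
Qed.

Lemma RsubI X Y : Rsub R (X :&: Y) = Rsub R X :&: Rsub R Y.
Proof.
apply/setP => r; rewrite !inE subsetI.
by case: (r \in R).
Qed.

Lemma RsubU X Y : Rsub R X :|: Rsub R Y \subset Rsub R (X :|: Y).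
Proof.
apply/subsetP => r; rewrite !inE => /orP [/andP [-> h]|/andP [-> h]] /=.
  by apply: subset_trans h (subsetUl _ _).
by apply: subset_trans h (subsetUr _ _).
Qed.

Lemma submod X Y :
  (delta R (X :|: Y) + delta R (X :&: Y) <= delta R X + delta R Y)%R.
Proof.
have h1 := cardsUI X Y.
have h2 := cardsUI (Rsub R X) (Rsub R Y).
have h3 := subset_leq_card (RsubU X Y).
rewrite -RsubI in h2.
rewrite /delta; lia.
Qed.

Lemma submod_eq X Y :
  (delta R (X :|: Y) + delta R (X :&: Y) = delta R X + delta R Y)%R ->
  Rsub R (X :|: Y) \subset Rsub R X :|: Rsub R Y.
Proof.
move=> E.
have h1 := cardsUI X Y.
have h2 := cardsUI (Rsub R X) (Rsub R Y).
have [h3 h4] := subset_leqif_card (RsubU X Y).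
rewrite -RsubI in h2.
rewrite -h4; apply/eqP.
move: E; rewrite /delta; lia.
Qed.

Lemma submod_eq_conv X Y :
  Rsub R (X :|: Y) \subset Rsub R X :|: Rsub R Y ->
  (delta R (X :|: Y) + delta R (X :&: Y) = delta R X + delta R Y)%R.
Proof.
move=> S.
have h1 := cardsUI X Y.
have h2 := cardsUI (Rsub R X) (Rsub R Y).
have h3 := subset_leq_card (RsubU X Y).
have h5 := subset_leq_card S.
rewrite -RsubI in h2.
rewrite /delta; lia.
Qed.

Lemma minim_cl X Y : X \subset Y -> delta R Y = dim R X -> Y \subset cl R X.
Proof.
move=> hXY hd; apply/subsetP => z hz; rewrite inE eq_le; apply/andP; split.
  rewrite -hd; apply: dim_le; by rewrite subUset sub1set hz.
by apply: dim_mono; exact: subsetUr.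
Qed.

Lemma cl_minim X y : y \in cl R X ->
  exists M : {set T}, [/\ X \subset M, y \in M & delta R M = dim R X].
Proof.
rewrite inE => /eqP e; have [Y [hY hd]] := dim_ex (y |: X).
exists Y; split.
- by apply: subset_trans hY; exact: subsetUr.
- by move/subsetP: hY; apply; rewrite !inE eqxx.
- by rewrite hd e.
Qed.

Lemma sub_cl X : X \subset cl R X.
Proof.
apply/subsetP => x hx; rewrite inE.
by have -> : x |: X = X by apply/setUidPr; rewrite sub1set.
Qed.

Lemma cl_mono X X' : X \subset X' -> cl R X \subset cl R X'.
Proof.
move=> h; apply/subsetP => y /cl_minim [M [hXM hyM hdM]].
have [Z [hZ hdZ]] := dim_ex X'.
have hs := submod M Z.
have hi : (dim R X <= delta R (M :&: Z))%R.
  by apply: dim_le; rewrite subsetI hXM; exact: subset_trans hZ.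
have hu : (dim R (y |: X') <= delta R (M :|: Z))%R.
  apply: dim_le; rewrite subUset sub1set inE hyM /=.
  by apply: subset_trans hZ (subsetUr _ _).
have hm : (dim R X' <= dim R (y |: X'))%R by apply: dim_mono; exact: subsetUr.
rewrite inE eq_le hm andbT.
move: hs hi hu; rewrite hdM hdZ; lia.
Qed.

End S.

Theorem theorem6p5 (T : finType) (R : {set {set T}}) (C F1 F2 : {set T}) :
  inC R -> self_sufficient R C ->
  closedC R C F1 -> closedC R C F2 ->
  cl R F1 :&: cl R F2 = cl R (F1 :&: F2).
Proof.
move=> _ hC [F1C cl1] [F2C cl2].
apply/eqP; rewrite eqEsubset; apply/andP; split; last first.
  by rewrite subsetI !cl_mono // ?subsetIl ?subsetIr.
apply/subsetP => y; rewrite inE => /andP [/cl_minim [M1 [h1 y1 d1]]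
  /cl_minim [M2 [h2 y2 d2]]].
set F := F1 :&: F2.
have key : forall F' M : {set T}, F' \subset C -> M \subset cl R F' -> F' \subset M ->
   clC R C F' = F' -> delta R M = dim R F' ->
   delta R (M :|: C) = delta R C /\
   Rsub R (M :|: C) \subset Rsub R M :|: Rsub R C /\ M :&: C = F'.
  move=> F' M hF'C hMcl hF'M hcl hd.
  have MC : M :&: C = F'.
    apply/eqP; rewrite eqEsubset subsetI hF'M hF'C andbT.
    by rewrite -hcl /clC setSI.
  have hs := submod R M C; rewrite MC in hs.
  have hl := dim_le R (subxx F').
  have hc := hC (M :|: C) (subsetUr _ _).
  have e1 : delta R (M :|: C) = delta R C by move: hs hl hc; rewrite hd; lia.
  split => //; split => //.
  apply: submod_eq; rewrite MC; move: hs hl hc; rewrite hd; lia.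
have [k1 [r1 c1]] := key F1 M1 F1C (minim_cl h1 d1) h1 cl1 d1.
have [k2 [r2 c2]] := key F2 M2 F2C (minim_cl h2 d2) h2 cl2 d2.
set H := M1 :&: M2.
have HC : H :&: C = F by rewrite /H /F -c1 -c2 setIACA setIid.
have HUC : (M1 :|: C) :&: (M2 :|: C) = H :|: C by rewrite setUIl.
have hs := submod R (M1 :|: C) (M2 :|: C).
rewrite HUC k1 k2 in hs.
have hc := hC ((M1 :|: C) :|: (M2 :|: C)) (subset_trans (subsetUr M1 C) (subsetUl _ _)).
have hHC : Rsub R (H :|: C) \subset Rsub R H :|: Rsub R C.
  apply/subsetP => r; rewrite inE => /andP [rR rs].
  case rC: (r \subset C); first by rewrite !inE rR rC orbT.
  have hM : forall M : {set T}, H \subset M ->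
     Rsub R (M :|: C) \subset Rsub R M :|: Rsub R C -> r \subset M.
    move=> M hHM hr.
    have : r \in Rsub R (M :|: C).
      by rewrite inE rR; apply: subset_trans rs _; rewrite setSU.
    by move/(subsetP hr); rewrite !inE rR rC orbF.
  rewrite !inE rR /= subsetI (hM M1) ?(hM M2) //; by [rewrite subsetIr | rewrite subsetIl].
have hE := submod_eq_conv hHC; rewrite HC in hE.
have hF : (delta R F <= dim R F)%R.
  have [Z [hZ hdZ]] := dim_ex R F.
  have ZC : Z :&: C = F.
    apply/eqP; rewrite eqEsubset; apply/andP; split; last first.
      by rewrite subsetI hZ /F subIset // F1C.
    rewrite /F subsetI; apply/andP; split.
      rewrite -cl1 /clC setSI //; apply: subset_trans (minim_cl hZ hdZ) _.
      by apply: cl_mono; exact: subsetIl.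
    rewrite -cl2 /clC setSI //; apply: subset_trans (minim_cl hZ hdZ) _.
    by apply: cl_mono; exact: subsetIr.
  have hs2 := submod R Z C; rewrite ZC in hs2.
  have hc2 := hC (Z :|: C) (subsetUr _ _).
  move: hs2 hc2; rewrite -hdZ; lia.
have hyF : (dim R (y |: F) <= delta R H)%R.
  apply: dim_le; rewrite subUset sub1set inE y1 y2 /= subsetI.
  rewrite /F; apply/andP; split.
    by apply: subset_trans h1; exact: subsetIl.
  by apply: subset_trans h2; exact: subsetIr.
have hm : (dim R F <= dim R (y |: F))%R by apply: dim_mono; exact: subsetUr.
rewrite inE eq_le hm andbT.
move: hs hc hE hF hyF; lia.
Qed.
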